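(* Let $A:=\{u_i\mid i\in I\}\subseteq\mathbb{R}^n$ be an indexed family with $\operatorname{card}I\ge n+1$ and $o\notin\operatorname{conv}A$. Then there exist nonempty sets $I_1,I_2\subseteq I$ with $I_1\cap I_2=\emptyset$, $I_1\cup I_2=I$ and $\operatorname{conv}A_1\cap\big((0,1]\operatorname{conv}A_2\big)\neq\emptyset$, where $A_k:=\{u_i\mid i\in I_k\}$ for $k\in\{1,2\}$.
   Context: $n\ge2$; $o$ denotes the zero vector of $\mathbb{R}^n$; $(0,1]B:=\{tb\mid t\in(0,1],b\in B\}$; $\operatorname{conv}$ denotes convex hull. *)

(* Defs.v *)
From mathcomp Require Import all_boot all_order all_algebra.
From mathcomp Require Import reals.
Set Implicit Arguments. Unset Strict Implicit. Unset Printing Implicit Defensive.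
Import Order.TTheory GRing.Theory Num.Theory.
Local Open Scope ring_scope.

Definition conv (R : realType) (n : nat) (A : 'rV[R]_n -> Prop) : 'rV[R]_n -> Prop :=
  fun x => exists (m : nat) (w : 'I_m -> R) (p : 'I_m -> 'rV[R]_n),
    [/\ forall i, 0 <= w i, \sum_(i < m) w i = 1, forall i, A (p i)
      & x = \sum_(i < m) w i *: p i].

Definition fam_img (I : Type) (R : realType) (n : nat) (u : I -> 'rV[R]_n)
  (J : I -> Prop) : 'rV[R]_n -> Prop := fun x => exists2 i, J i & x = u i.

Definition scale01 (R : realType) (n : nat) (B : 'rV[R]_n -> Prop) : 'rV[R]_n -> Prop :=
  fun x => exists t b, [/\ 0 < t, t <= 1, B b & x = t *: b].

(* Main.v *)
Require Import Defs.
From mathcomp Require Import all_boot all_order all_algebra.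
From mathcomp Require Import reals.
From Stdlib Require Import Classical.
Import Order.TTheory GRing.Theory Num.Theory.
Local Open Scope ring_scope.

Lemma conv_w (R : realType) (n m : nat) (A : 'rV[R]_n -> Prop)
  (d : 'I_m -> R) (v : 'I_m -> 'rV[R]_n) :
  (forall j, 0 <= d j) -> 0 < \sum_j d j -> (forall j, d j != 0 -> A (v j)) ->
  conv A ((\sum_j d j)^-1 *: \sum_j d j *: v j).
Proof.
move=> d0 dp dA.
have [j0 hj0] : exists j, d j != 0.
  case: (pickP (fun j => d j != 0)) => [j hj|h]; first by exists j.
  suff : \sum_j d j = 0 by move=> e; rewrite e ltxx in dp.
  by apply: big1 => j _; have := h j => /= /negbFE /eqP.
set D := \sum_j d j.
exists m, (fun j => d j / D), (fun j => if d j != 0 then v j else v j0); split.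
- by move=> j; rewrite divr_ge0 // ltW.
- by rewrite -mulr_suml mulfV // gt_eqF.
- by move=> j; case: ifP => h; apply: dA.
- rewrite scaler_sumr; apply: eq_bigr => j _.
  rewrite scalerA mulrC; case: ifP => // /negbFE /eqP ->.
  by rewrite mul0r !scale0r.
Qed.

Definition cpos {R : realType} {m} (c : 'I_m -> R) j := if 0 < c j then c j else 0.
Definition cneg {R : realType} {m} (c : 'I_m -> R) j := if c j < 0 then - c j else 0.

Lemma key (R : realType) (n m : nat) (I : Type) (u : I -> 'rV[R]_n)
  (f : 'I_m -> I) (finj : injective f)
  (ho : ~ conv (fam_img u (fun _ => True)) 0)
  (c : 'I_m -> R) (hc : exists j, c j != 0)
  (hs : \sum_j c j *: u (f j) = 0)
  (hab : \sum_j cneg c j <= \sum_j cpos c j) :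
  exists I1 I2 : I -> Prop,
    [/\ (exists i, I1 i), (exists i, I2 i),
        (forall i, ~ (I1 i /\ I2 i)),
        (forall i, I1 i \/ I2 i)
      & exists x, conv (fam_img u I1) x /\ scale01 (conv (fam_img u I2)) x].
Proof.
have cp0 : forall j, 0 <= cpos c j by move=> j; rewrite /cpos; case: ifP => // /ltW.
have cn0 : forall j, 0 <= cneg c j.
  by move=> j; rewrite /cneg; case: ifP => // h; rewrite oppr_ge0 ltW.
have cE : forall j, c j = cpos c j - cneg c j.
  move=> j; rewrite /cpos /cneg; case: (ltgtP (c j) 0) => h.
  - by rewrite sub0r opprK.
  - by rewrite subr0.
  - by rewrite h subr0.
set a := \sum_j cpos c j; set b := \sum_j cneg c j.
have hpn : \sum_j cpos c j *: u (f j) = \sum_j cneg c j *: u (f j).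
  apply/eqP; rewrite -subr_eq0 -sumrB -[X in _ == X]hs; apply/eqP.
  by apply: eq_bigr => j _; rewrite -scalerBl -cE.
have bp : 0 < b.
  rewrite lt_def sumr_ge0 // andbT; apply/negP => /eqP b0.
  have hn := psumr_eq0P (fun j _ => cn0 j) b0.
  have hcp : forall j, c j = cpos c j by move=> j; rewrite cE hn // subr0.
  have ap : 0 < a.
    rewrite lt_def sumr_ge0 // andbT; apply/negP => /eqP a0.
    have hp := psumr_eq0P (fun j _ => cp0 j) a0.
    case: hc => j; by rewrite hcp hp // eqxx.
  apply: ho.
  have := @conv_w R n m (fam_img u (fun _ => True)) (cpos c) (fun j => u (f j))
    cp0 ap (fun j _ => ex_intro2 _ _ (f j) Logic.I erefl).
  suff -> : \sum_j cpos c j *: u (f j) = 0 by rewrite scaler0.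
  rewrite -[RHS]hs; apply: eq_bigr => j _; by rewrite -hcp.
have ap : 0 < a by apply: lt_le_trans hab.
pose I2 := fun i => exists j, c j < 0 /\ i = f j.
exists (fun i => ~ I2 i), I2; split.
- have [j hj] : exists j, cpos c j != 0.
    case: (pickP (fun j => cpos c j != 0)) => [j hj|h]; first by exists j.
    suff : a = 0 by move=> e; rewrite e ltxx in ap.
    by apply: big1 => j _; have := h j => /= /negbFE /eqP.
  exists (f j) => -[j' [hj' /finj e]]; subst j'.
  by move: hj; rewrite /cpos ltNge (ltW hj') eqxx.
- have [j hj] : exists j, cneg c j != 0.
    case: (pickP (fun j => cneg c j != 0)) => [j hj|h]; first by exists j.
    suff : b = 0 by move=> e; rewrite e ltxx in bp.
    by apply: big1 => j _; have := h j => /= /negbFE /eqP.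
  exists (f j), j; split => //.
  by move: hj; rewrite /cneg; case: ifP => //; rewrite eqxx.
- by move=> i [].
- by move=> i; case: (classic (I2 i)) => h; [right|left].
exists (a^-1 *: \sum_j cpos c j *: u (f j)); split.
  apply: conv_w => // j hj; exists (f j) => //.
  move=> -[j' [hj' /finj e]]; subst j'.
  by move: hj; rewrite /cpos ltNge (ltW hj') eqxx.
exists (b / a), (b^-1 *: \sum_j cneg c j *: u (f j)); split.
- by rewrite divr_gt0.
- by rewrite ler_pdivrMr // mul1r.
- apply: conv_w => // j hj; exists (f j) => //; exists j; split => //.
  by move: hj; rewrite /cneg; case: ifP => //; rewrite eqxx.
- rewrite scalerA hpn mulrAC mulfV ?gt_eqF // mul1r //.
Qed.
Lemma dep (F : fieldType) (n : nat) (v : 'I_n.+1 -> 'rV[F]_n) :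
  exists c : 'I_n.+1 -> F, (exists j, c j != 0) /\ \sum_j c j *: v j = 0.
Proof.
pose M : 'M[F]_(n.+1, n) := \matrix_(i, j) v i 0 j.
have hk : kermx M != 0.
  rewrite -mxrank_eq0 mxrank_ker.
  have := rank_leq_col M. move=> h. apply/eqP => /eqP. rewrite subn_eq0 => h2.
  have := leq_trans h2 h. by rewrite ltnn.
case/rowV0Pn: hk => w /sub_kermxP hw hw0.
exists (fun j => w 0 j); split.
  case: (pickP (fun j => w 0 j != 0)) => [j hj|h]; first by exists j.
  case/eqP: hw0; apply/rowP => j; rewrite mxE.
  by have := h j => /= /negbFE /eqP.
transitivity (w *m M); last exact: hw.
rewrite mulmx_sum_row; apply: eq_bigr => j _; congr (_ *: _).
by apply/rowP => k; rewrite !mxE.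
Qed.

Theorem mainTheorem9 (R : realType) (n : nat) (hn : (2 <= n)%N)
  (I : Type) (u : I -> 'rV[R]_n)
  (hcard : exists f : 'I_n.+1 -> I, injective f)
  (ho : ~ conv (fam_img u (fun _ => True)) 0) :
  exists I1 I2 : I -> Prop,
    [/\ (exists i, I1 i), (exists i, I2 i),
        (forall i, ~ (I1 i /\ I2 i)),
        (forall i, I1 i \/ I2 i)
      & exists x, conv (fam_img u I1) x /\ scale01 (conv (fam_img u I2)) x].
Proof.
case: hcard => f finj.
have [c [hc hs]] := @dep R n (fun j => u (f j)).
move: hs => /= hs.
have [h|h] := leP (\sum_j cneg c j) (\sum_j cpos c j).
  exact: (@key R n _ I u f finj ho c hc hs h).
apply: (@key R n _ I u f finj ho (fun j => - c j)).
- by case: hc => j hj; exists j; rewrite oppr_eq0.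
- rewrite -[RHS]oppr0 -[in RHS]hs -sumrN; apply: eq_bigr => j _; by rewrite scaleNr.
- have e1 : forall j, cneg (fun j => - c j) j = cpos c j.
    by move=> j; rewrite /cneg /cpos oppr_lt0; case: ifP => //; rewrite opprK.
  have e2 : forall j, cpos (fun j => - c j) j = cneg c j.
    by move=> j; rewrite /cneg /cpos oppr_gt0.
  rewrite (eq_bigr _ (fun j _ => e1 j)) (eq_bigr _ (fun j _ => e2 j)).
  exact: ltW.
Qed.
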